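(* Fix $j\in\{0,\dots,4\}$ and let $r\in\Lambda_j$ be primitive in $\Lambda_j$ with $r^2>0$. Then $r$ is a root of $\Lambda_j$ if and only if either $r^2\in\{1,2\}$, or $r^2\in\{3,6\}$ and $r\in 3\Lambda_j'$, where $\Lambda_j'$ is the dual lattice of $\Lambda_j$.
   Context: Let $\omega=e^{2\pi i/3}$, $\mathcal{E}=\mathbb{Z}[\omega]$, $\theta=\sqrt{-3}$. Let $\Lambda=\mathcal{E}^5$ with Hermitian form $h(x,y)=-x_0\bar y_0+x_1\bar y_1+\dots+x_4\bar y_4$, and write $x\cdot y$ for $h(x,y)$ and $x^2=h(x,x)$. For $j=0,\dots,4$, $\Lambda_j=\mathbb{Z}^{5-j}\oplus\theta\mathbb{Z}^j\subset\mathcal{E}^5$ is the $\mathbb{Z}$-lattice of vectors fixed by the antilinear map $(x_0,\dots,x_4)\mapsto(\bar x_0,\dots,\bar x_{4-j},-\bar x_{5-j},\dots,-\bar x_4)$, with the (real, integral) restriction of $h$. A root of $\Lambda_j$ is a primitive vector $r\in\Lambda_j$ with $r^2>0$ such that the reflection $x\mapsto x-2\frac{x\cdot r}{r^2}r$ preserves $\Lambda_j$. *)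

(* Defs.v *)
From mathcomp Require Import all_boot all_order all_algebra.
Set Implicit Arguments. Unset Strict Implicit. Unset Printing Implicit Defensive.
Import Order.TTheory GRing.Theory Num.Theory.
Local Open Scope ring_scope.

(* Coordinates of Lambda_j = Z^{5-j} (+) theta Z^j inside E^5:
   a vector of Lambda_j is (a_0,...,a_{4-j}, theta b_{5-j}, ..., theta b_4)
   with a_i, b_i integers; we represent it by the integer coordinate vector
   (a_0,...,a_{4-j}, b_{5-j},...,b_4) : 'I_5 -> int.
   The restriction of h is then  -a_0 a_0' + sum a_i a_i' + 3 sum b_i b_i'
   since (theta b)(conj (theta b')) = 3 b b'. *)

Definition wt (j i : 'I_5) : int :=
  if (val i == 0)%N then -1 else if (5 - val j <= val i)%N then 3 else 1.

Definition ldot (j : 'I_5) (x y : 'I_5 -> int) : int :=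
  \sum_(i < 5) wt j i * x i * y i.

Definition qdot (j : 'I_5) (x y : 'I_5 -> rat) : rat :=
  \sum_(i < 5) (wt j i)%:~R * x i * y i.

Definition toQ (x : 'I_5 -> int) : 'I_5 -> rat := fun i => (x i)%:~R.

Definition primitive (r : 'I_5 -> int) : Prop :=
  r <> (fun _ => 0) /\
  forall (k : int) (s : 'I_5 -> int), (forall i, r i = k * s i) -> k = 1 \/ k = -1.

Definition refl_preserves (j : 'I_5) (r : 'I_5 -> int) : Prop :=
  forall x : 'I_5 -> int, exists y : 'I_5 -> int, forall i,
    (y i)%:~R = (x i)%:~R - 2 * (ldot j x r)%:~R / (ldot j r r)%:~R * (r i)%:~R :> rat.

Definition is_root (j : 'I_5) (r : 'I_5 -> int) : Prop :=
  primitive r /\ 0 < ldot j r r /\ refl_preserves j r.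

Definition in_dual (j : 'I_5) (y : 'I_5 -> rat) : Prop :=
  forall x : 'I_5 -> int, exists z : int, qdot j y (toQ x) = z%:~R.

Definition in_3dual (j : 'I_5) (r : 'I_5 -> int) : Prop :=
  exists y : 'I_5 -> rat, in_dual j y /\ forall i, toQ r i = 3 * y i.

(* Main.v *)
Require Import Defs.
From mathcomp Require Import all_boot all_order all_algebra ring.
Import Order.TTheory GRing.Theory Num.Theory.
Local Open Scope ring_scope.

Lemma prim_dvd {r : 'I_5 -> int} {n a : int} : primitive r -> n != 0 ->
  (forall i, (n %| a * r i)%Z) -> (n %| a)%Z.
Proof.
move=> [_ hp] n0 h.
have [u [v e]] := Bezoutz n a.
set g := gcdz n a in e.
have g0 : g != 0 by rewrite gcdz_eq0 negb_and n0.
have hg : forall i, (n %| g * r i)%Z.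
  move=> i; rewrite -e mulrDl -!mulrA.
  by rewrite rpredD // dvdz_mull // dvdz_mulr.
have := divzK (intdiv.dvdz_gcdl n a); rewrite -/g => En.
have hm : forall i, r i = (n %/ g)%Z * divz (r i) (divz n g).
  move=> i; rewrite mulrC divzK //.
  by rewrite -(@dvdz_mul2r g _ _ g0) En mulrC.
case: (hp _ _ hm) => E; rewrite E ?mul1r ?mulN1r in En; rewrite -En ?dvdzE ?abszN -?dvdzE /g; exact: intdiv.dvdz_gcdr.
Qed.


Definition ev (k : 'I_5) : 'I_5 -> int := fun i => ((i == k) : nat)%:Z.

Lemma ldot_ev j k x : ldot j (ev k) x = wt j k * x k.
Proof.
rewrite /ldot (bigD1 k) //= big1 ?addr0 => [|i /negbTE Hi]; rewrite /ev ?eqxx ?Hi.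
  by rewrite mulr1.
by rewrite mulr0 mul0r.
Qed.

Lemma qdot_ev j k y : qdot j y (toQ (ev k)) = (wt j k)%:~R * y k.
Proof.
rewrite /qdot (bigD1 k) //= big1 ?addr0 => [|i /negbTE Hi]; rewrite /toQ /ev ?eqxx ?Hi.
  by rewrite mulr1.
by rewrite mulr0.
Qed.

Lemma wt_cases j i : wt j i = -1 \/ wt j i = 1 \/ wt j i = 3.
Proof. by rewrite /wt; case: ifP => _; [|case: ifP => _]; auto. Qed.

Definition Cond j r := forall k, (ldot j r r %| 2 * (wt j k * r k))%Z.

Lemma L1 j r : primitive r -> 0 < ldot j r r -> (refl_preserves j r <-> Cond j r).
Proof.
move=> hp hn; have n0 : ldot j r r != 0 by rewrite gt_eqF.
have n0' : (ldot j r r)%:~R != 0 :> rat by rewrite intr_eq0.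
split.
  move=> hr; rewrite /Cond => k.
  apply: (prim_dvd hp n0) => i.
  have [y hy] := hr (ev k); have := hy i; rewrite ldot_ev => E.
  apply/dvdzP; exists (ev k i - y i).
  apply: (@intr_inj rat); rewrite !rmorphM /= rmorphB /= E.
  by field.
move=> hC x.
have hd : (ldot j r r %| 2 * ldot j x r)%Z.
  rewrite /ldot mulr_sumr; apply: rpred_sum => i _.
  have -> : 2 * (wt j i * x i * r i) = x i * (2 * (wt j i * r i)) by ring.
  exact: dvdz_mull.
have Ec := divzK hd.
set c := divz _ _ in Ec.
have Ec' : (c%:~R : rat) = 2 * (ldot j x r)%:~R / (ldot j r r)%:~R.
  apply: (canRL (mulfK n0')); rewrite -rmorphM /= Ec rmorphM //.
exists (fun i => x i - c * r i) => i.
by rewrite -Ec' rmorphB rmorphM.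
Qed.

Lemma L4 j r : in_3dual j r <-> forall k, (3 %| wt j k * r k)%Z.
Proof.
split.
  move=> [y [hd hy]] k.
  have [z hz] := hd (ev k); rewrite qdot_ev in hz.
  apply/dvdzP; exists z; apply: (@intr_inj rat).
  rewrite !rmorphM /= -hz; have := hy k; rewrite /toQ => ->.
  rewrite (_ : (3%:~R : rat) = 3) //; ring.
move=> h; exists (fun i => (r i)%:~R / 3); split; last first.
  by move=> i; rewrite /toQ; field.
move=> x; exists (\sum_(i < 5) divz (wt j i * r i) 3 * x i).
rewrite /qdot rmorph_sum; apply: eq_bigr => i _.
have := divzK (h i); set q := divz _ _ => Eq.
have Eq' : (q%:~R : rat) = (wt j i)%:~R * (r i)%:~R / 3.
  by rewrite -rmorphM /= -Eq rmorphM /=; field.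
by rewrite rmorphM /= Eq' /toQ; field.
Qed.

Lemma L3 (n : int) : 0 < n -> (n %| 6)%Z -> n = 1 \/ n = 2 \/ n = 3 \/ n = 6.
Proof.
case: n => // m _; rewrite dvdzE /=.
move=> hd; have := dvdn_leq (isT : (0 < 6)%N) hd.
by do 7! (case: m hd => [|m] hd //=; auto).
Qed.

Theorem lemma5p4 (j : 'I_5) (r : 'I_5 -> int)
  (hprim : primitive r) (hpos : 0 < ldot j r r) :
  is_root j r <->
  ((ldot j r r = 1 \/ ldot j r r = 2) \/
   ((ldot j r r = 3 \/ ldot j r r = 6) /\ in_3dual j r)).
Proof.
have n0 : ldot j r r != 0 by rewrite gt_eqF.
split.
  move=> [_ [_ /(L1 j r hprim hpos) hC]].
  have h6 : (ldot j r r %| 6)%Z.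
    apply: (prim_dvd hprim n0) => i; have := hC i.
    case: (wt_cases j i) => [->|[->|->]] H.
    - have -> : 6 * r i = (2 * (-1 * r i)) * (-3) by ring.
      exact: dvdz_mulr.
    - have -> : 6 * r i = (2 * (1 * r i)) * 3 by ring.
      exact: dvdz_mulr.
    - by have -> : 6 * r i = 2 * (3 * r i) by ring.
  have h3 : (3 %| ldot j r r)%Z -> in_3dual j r.
    move=> d3; apply/L4 => k.
    have : (3 %| 3 * (wt j k * r k) - 2 * (wt j k * r k))%Z.
      apply: rpredB; [exact: dvdz_mulr (dvdzz 3) | exact: (dvdz_trans d3 (hC k))].
    by have -> : 3 * (wt j k * r k) - 2 * (wt j k * r k) = wt j k * r k by ring.
  case: (L3 _ hpos h6) => [E|[E|[E|E]]].
  - by left; left.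
  - by left; right.
  - by right; split; [left | apply: h3; rewrite E].
  - by right; split; [right | apply: h3; rewrite E].
move=> H; split; first by []; split; first by [].
apply/(L1 j r hprim hpos) => k.
case: H => [[E|E]|[E3 /L4 h]]; rewrite ?E.
- exact: dvd1z.
- exact: dvdz_mulr.
- have h6 : (6 %| 2 * (wt j k * r k))%Z by apply: (@dvdz_mul 2 3).
  by case: E3 => ->; [apply: dvdz_trans h6|].
Qed.
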